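(* Let $c\ge2$ and let $F$ be a standard $c$-coloring. Let $X\in\mathcal X_F$ and let $c_1$ be the color of the monochromatic clique $F[X]$. Then for every $y\in V(F)\setminus X$ there exists at most one edge $e_0\in y\ast X$ with $F(e_0)=c_1$, and there is a color $c_2\neq c_1$ such that $F(e)=c_2$ for all $e\in (y\ast X)\setminus\{e_0\}$ (where $\{e_0\}$ is empty if no such edge exists).
   Context: A $c$-coloring $F$ is a map from the $2$-subsets of a finite set $V(F)$ to $[c]$. $F$ is standard if it contains no induced copy of any coloring in $\hat K_{3,1}$ or $\hat K_{3,3}$, where: $\hat K_{3,1}$ is the family of $4$-vertex colorings consisting of a monochromatic triangle of color $a$ plus a vertex joined to it by either (two edges of color $a$ and one of color $b\ne a$), or (three edges of three distinct colors, one being $a$), or (two edges of color $b$ and one of color $d$, with $a,b,d$ distinct); $\hat K_{3,3}$ is the family of $6$-vertex colorings consisting of two disjoint triangles monochromatic in colors $a$ and $b$ with all nine edges between them of color $d$, $a,b,d$ distinct. $\mathcal X_F$ is the set of all inclusion-maximal vertex sets $X$ of size at least $\max(c+1,6)$ such that all pairs inside $X$ have the same color. For disjoint sets $S_1,S_2$, $S_1\ast S_2$ is the set of pairs $\{v_1,v_2\}$ with $v_i\in S_i$, and $y\ast S=\{y\}\ast S$. *)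

(* Defs.v *)
From mathcomp Require Import all_boot.
Set Implicit Arguments. Unset Strict Implicit. Unset Printing Implicit Defensive.

(* A c-coloring on the finite vertex type V: a map from subsets of V to
   colors 'I_c (colors [c] = {1..c} renumbered as {0..c-1}); only its values
   on 2-subsets [set x; y] (x != y) are meaningful. *)
Definition coloring (V : finType) (c : nat) := {set V} -> 'I_c.

Section Defs.
Variables (V : finType) (c : nat) (F : coloring V c).

Definition col (x y : V) : 'I_c := F [set x; y].

(* Colors (p, q, r) of the three edges from the extra vertex to a
   monochromatic triangle of color a, where r is the "odd one out":
   pattern (i) two edges of color a and one of color b != a, or
   pattern (iii) two of color b and one of color d, a,b,d distinct. *)
Definition K31_pat_odd (a p q r : 'I_c) : bool :=
  [&& p == a, q == a & r != a] ||
  [&& p != a, p == q, r != a & r != p].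

Definition K31_pat_rainbow (a p q r : 'I_c) : bool :=
  [&& p != q, q != r, p != r & (a \in [:: p; q; r])].

Definition K31_pat (a p q r : 'I_c) : bool :=
  [|| K31_pat_odd a p q r, K31_pat_odd a q r p, K31_pat_odd a r p q
    | K31_pat_rainbow a p q r].

Definition has_K31 : Prop :=
  exists (t1 t2 t3 v : V) (a : 'I_c),
    uniq [:: t1; t2; t3; v] /\
    col t1 t2 = a /\ col t2 t3 = a /\ col t1 t3 = a /\
    K31_pat a (col v t1) (col v t2) (col v t3).

Definition has_K33 : Prop :=
  exists (u1 u2 u3 w1 w2 w3 : V) (a b d : 'I_c),
    uniq [:: u1; u2; u3; w1; w2; w3] /\
    uniq [:: a; b; d] /\
    col u1 u2 = a /\ col u2 u3 = a /\ col u1 u3 = a /\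
    col w1 w2 = b /\ col w2 w3 = b /\ col w1 w3 = b /\
    (forall u w, u \in [:: u1; u2; u3] -> w \in [:: w1; w2; w3] -> col u w = d).

Definition standard : Prop := ~ has_K31 /\ ~ has_K33.

Definition mono (X : {set V}) : Prop :=
  forall x y z w, x \in X -> y \in X -> z \in X -> w \in X ->
    x != y -> z != w -> col x y = col z w.

Definition in_XF (X : {set V}) : Prop :=
  [/\ maxn c.+1 6 <= #|X|, mono X &
      forall Y : {set V}, X \proper Y -> maxn c.+1 6 <= #|Y| -> ~ mono Y].

End Defs.

(* Main.v *)
Require Import Defs.
From mathcomp Require Import all_boot.
Set Implicit Arguments.
Lemma L0 c (a r : 'I_c) : r != a -> K31_pat a a a r.
Proof. by move=> h; rewrite /K31_pat /K31_pat_odd eqxx h. Qed.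
Lemma L2 c (a p r : 'I_c) : p != a -> r != a -> r != p -> K31_pat a p r r.
Proof. by move=> h1 h2 h3; rewrite /K31_pat /K31_pat_odd h1 h2 h3 eqxx /= (eq_sym p r) h3 !orbT. Qed.
Lemma L1 c (a p q r : 'I_c) : p != a -> q != a -> p != q -> ~~ K31_pat a p q r ->
  (r != a) && (r != p).
Proof.
move=> h1 h2 h3; apply: contraR; rewrite negb_and !negbK => /orP[/eqP->|/eqP->].
  by rewrite /K31_pat /K31_pat_rainbow !inE eqxx h3 h2 h1 !orbT.
by rewrite /K31_pat /K31_pat_odd (eq_sym q p) h3 h1 h2 eqxx !orbT.
Qed.
Theorem claim5p3 (V : finType) (c : nat) (F : coloring V c) (X : {set V})
    (c1 : 'I_c) :
  2 <= c -> standard F -> in_XF F X ->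
  (forall x x', x \in X -> x' \in X -> x != x' -> col F x x' = c1) ->
  forall y, y \notin X ->
    (forall x x', x \in X -> x' \in X ->
        col F y x = c1 -> col F y x' = c1 -> x = x') /\
    (exists c2 : 'I_c, c2 != c1 /\
        forall x, x \in X -> col F y x != c1 -> col F y x = c2).
Proof.
move=> c2 [nK31 _] [HX _ Hmax] Hc1 y Hy.
have colC u v : col F u v = col F v u by rewrite /col setUC.
have Xc : c < #|X| by apply: leq_trans HX; apply: leq_maxl.
have noK t1 t2 t3 : t1 \in X -> t2 \in X -> t3 \in X -> t1 != t2 -> t2 != t3 ->
    t1 != t3 -> ~~ K31_pat c1 (col F y t1) (col F y t2) (col F y t3).
  move=> h1 h2 h3 d12 d23 d13; apply/negP => HK; apply: nK31.
  have ny t : t \in X -> t != y by move=> ht; apply: contraNneq Hy => <-.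
  exists t1, t2, t3, y, c1; split.
    by rewrite /= !inE !negb_or d12 d13 d23 (ny t1) // (ny t2) // (ny t3).
  by do !split => //; apply: Hc1.
have P1 : forall x x', x \in X -> x' \in X -> col F y x = c1 -> col F y x' = c1 -> x = x'.
  move=> x x' hx hx' e e'; apply/eqP; apply/negPn/negP => dxx.
  have all1 : forall z, z \in X -> col F y z = c1.
    move=> z hz; case: (eqVneq z x) => [->//|dzx]; case: (eqVneq z x') => [->//|dzx'].
    apply/eqP; apply: contraNT (noK x x' z hx hx' hz dxx _ _); rewrite ?(eq_sym _ z) //.
    by move=> ne; rewrite e e'; exact: L0.
  apply: (Hmax (y |: X)).
  - by apply: properUr; rewrite sub1set.
  - by apply: leq_trans HX _; apply: subset_leq_card; apply: subsetUr.
  - move=> u v w z hu hv hw hz duv dwz.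
    have key s t : s \in y |: X -> t \in y |: X -> s != t -> col F s t = c1.
      move=> /setU1P[->|hs] /setU1P[->|ht] dst.
      + by rewrite eqxx in dst.
      + exact: all1.
      + by rewrite colC; apply: all1.
      + exact: Hc1.
    by rewrite !key.
split=> //.
case: (pickP [pred x in X | col F y x != c1]) => [x1 /andP[hx1 n1]|none].
  exists (col F y x1); split => // x hx nx.
  apply/eqP; apply/negPn/negP => dif.
  have dx1x : x1 != x by apply: contraNneq dif => ->.
  have H2 : forall z, z \in X -> z != x1 -> (col F y z != c1) && (col F y z != col F y x1).
    move=> z hz dz; case: (eqVneq z x) => [->|dzx]; first by rewrite nx dif.
    apply: (@L1 _ c1 _ _ (col F y z) n1 nx); first by rewrite eq_sym.
    by apply: noK; rewrite // eq_sym.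
  have inj : {in X &, injective (col F y)}.
    move=> u v hu hv e; apply/eqP; apply/negPn/negP => duv.
    case: (eqVneq u x1) => [eu|dux1].
      subst u; have := H2 v hv; rewrite eq_sym => /(_ duv).
      by rewrite e eqxx andbF.
    case: (eqVneq v x1) => [ev|dvx1].
      by subst v; have := H2 u hu dux1; rewrite e eqxx andbF.
    have /andP[a2 b2] := H2 v hv dvx1.
    move: (noK x1 u v hx1 hu hv); rewrite e (@L2 _ c1 _ _ n1 a2 b2) => /(_ _ duv _).
    by rewrite !(eq_sym x1) dux1 dvx1 => /(_ isT isT).
  have : #|X| <= c by rewrite -(card_in_imset inj); apply: leq_trans (max_card _) _; rewrite card_ord.
  by rewrite leqNgt Xc.
have [c2' hc2'] : exists c2' : 'I_c, c2' != c1.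
  pose o0 := Ordinal (ltnW c2 : 0 < c); pose o1 := Ordinal (c2 : 1 < c).
  case: (eqVneq o0 c1) => [e|ne]; last by exists o0.
  by exists o1; rewrite -e; apply/eqP => /(congr1 val).
exists c2'; split => // x hx nx.
by have := none x; rewrite /= hx nx.
Qed.
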